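(* Let $G$ be a triangle-free graph. If $G\in\mathcal U$, then no vertex of $G$ is adjacent to more than one support vertex.
   Context: All graphs are finite and simple. A set $P\subseteq V(G)$ is an open packing if no two distinct vertices of $P$ have a common neighbor; it is maximal if maximal under inclusion among open packings. $\rho^o(G)$ is the maximum size of an open packing and $\rho^o_L(G)$ the minimum size of a maximal open packing; $\mathcal U$ is the class of graphs with $\rho^o_L(G)=\rho^o(G)$. A leaf is a vertex of degree $1$; a support vertex is a vertex adjacent to at least one leaf. *)

(* Defs.v *)
From mathcomp Require Import all_boot.
Set Implicit Arguments. Unset Strict Implicit. Unset Printing Implicit Defensive.

(* A finite simple graph: vertex set T (a finType), adjacency e : rel T,
   assumed symmetric and irreflexive (hypotheses in the theorem). *)
Section Graph.
Variables (T : finType) (e : rel T).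

Definition nbhd (v : T) : {set T} := [set u | e v u].
Definition deg (v : T) : nat := #|nbhd v|.
Definition is_leaf (v : T) : bool := deg v == 1.
Definition is_support (v : T) : bool := [exists u, e v u && is_leaf u].

Definition triangle_free : Prop :=
  forall x y z : T, ~~ [&& e x y, e y z & e x z].

Definition open_packing (P : {set T}) : bool :=
  [forall x in P, forall y in P, (x != y) ==> [forall w, ~~ (e x w && e y w)]].

Definition maximal_open_packing (P : {set T}) : bool := maxset open_packing P.

Definition rho_o : nat := \max_(P : {set T} | open_packing P) #|P|.
(* rho^o_L(G): minimum size of a maximal open packing (maximal open packings
   exist, e.g. any maximal extension of the empty set, and all have size <= #|T|,
   so the default #|T| does not affect the value) *)
Definition rho_oL : nat := \big[minn/#|T|]_(P : {set T} | maximal_open_packing P) #|P|.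

Definition in_U : Prop := rho_oL = rho_o.
End Graph.

(* Main.v *)
Require Import Defs.
From mathcomp Require Import all_boot.

Lemma bigmin_le (I : finType) (P : pred I) (F : I -> nat) n i0 :
  P i0 -> \big[minn/n]_(i | P i) F i <= F i0.
Proof.
move=> Pi0; rewrite -big_filter.
have : i0 \in [seq i <- index_enum I | P i] by rewrite mem_filter Pi0 mem_index_enum.
elim: [seq i <- _ | _] => [|x s IH] //=.
rewrite inE big_cons => /orP [/eqP <-|/IH H]; first exact: geq_minl.
exact: leq_trans (geq_minr _ _) H.
Qed.

Theorem lemma1 (T : finType) (e : rel T) (e_sym : symmetric e) (e_irr : irreflexive e) :
  triangle_free e -> in_U e ->
  forall v : T, #|[set u | e v u && is_support e u]| <= 1.
Proof.
move=> _ hU v; rewrite leqNgt; apply/negP => /card_gt1P [s1 [s2 []]].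
rewrite !inE => /andP [vs1 /existsP [l1 /andP [s1l1 L1]]].
move=> /andP [vs2 /existsP [l2 /andP [s2l2 L2]]] ns.
have leafE : forall u a b, is_leaf e u -> e u a -> e u b -> a = b.
  move=> u a b /cards1P [x hx] ua ub.
  have : a \in nbhd e u by rewrite inE.
  have : b \in nbhd e u by rewrite inE.
  by rewrite hx !inE => /eqP -> /eqP ->.
have vnl : forall l, is_leaf e l -> l != v.
  move=> l Ll; apply/eqP => lv; subst l; move/eqP: ns; apply; exact: leafE _ _ _ Ll vs1 vs2.
have l1s1 : e l1 s1 by rewrite e_sym.
have l2s2 : e l2 s2 by rewrite e_sym.
have opv : open_packing e [set v].
  by apply/forallP => x; apply/implyP; rewrite inE => /eqP ->; apply/forallP => y;
     apply/implyP; rewrite inE => /eqP ->; rewrite eqxx.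
have [Q mQ sQ] := maxset_exists opv.
have vQ : v \in Q by apply: (subsetP sQ); rewrite inE.
have [opQ _] := maxsetP mQ.
have noadj : forall x w, x \in Q -> x != v -> e v w -> ~~ e x w.
  move=> x w xQ xv vw; apply/negP => xw.
  move/forallP/(_ x)/implyP/(_ xQ)/forallP/(_ v)/implyP/(_ vQ)/implyP/(_ xv): opQ.
  by move/forallP/(_ w); rewrite xw vw.
have l1Q : l1 \notin Q.
  apply/negP => h; by move: (noadj _ _ h (vnl _ L1) vs1); rewrite l1s1.
have l2Q : l2 \notin Q.
  apply/negP => h; by move: (noadj _ _ h (vnl _ L2) vs2); rewrite l2s2.
have nl12 : l1 != l2.
  apply/eqP => h; subst l2; move/eqP: ns; apply; exact: leafE _ _ _ L1 l1s1 l2s2.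
pose Q' := l1 |: (l2 |: (Q :\ v)).
have opQ' : open_packing e Q'.
  have key : forall x y w, x \in Q' -> y \in Q' -> x != y -> e x w -> e y w -> False.
    move=> x y w; rewrite !inE.
    move=> /or3P [/eqP->|/eqP->|/andP [xv xQ]] /or3P [/eqP->|/eqP->|/andP [yv yQ]] //.
    - by rewrite eqxx.
    - move=> _ a b; move: (leafE _ _ _ L1 a l1s1) (leafE _ _ _ L2 b l2s2) => E1 E2.
      by move: ns; rewrite -E1 -E2 eqxx.
    - by move=> _ a b; move: (leafE _ _ _ L1 a l1s1) b => ->; move/negP: (noadj _ _ yQ yv vs1).
    - move=> _ a b; move: (leafE _ _ _ L2 a l2s2) (leafE _ _ _ L1 b l1s1) => E1 E2.
      by move: ns; rewrite -E1 -E2 eqxx.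
    - by rewrite eqxx.
    - by move=> _ a b; move: (leafE _ _ _ L2 a l2s2) b => ->; move/negP: (noadj _ _ yQ yv vs2).
    - by move=> _ a b; move: (leafE _ _ _ L1 b l1s1) a => ->; move/negP: (noadj _ _ xQ xv vs1).
    - by move=> _ a b; move: (leafE _ _ _ L2 b l2s2) a => ->; move/negP: (noadj _ _ xQ xv vs2).
    - move=> nxy a b.
      move/forallP/(_ x)/implyP/(_ xQ)/forallP/(_ y)/implyP/(_ yQ)/implyP/(_ nxy): opQ.
      by move/forallP/(_ w); rewrite a b.
  apply/forallP => x; apply/implyP => xQ; apply/forallP => y; apply/implyP => yQ.
  apply/implyP => nxy; apply/forallP => w; apply/negP => /andP [a b].
  exact: key xQ yQ nxy a b.
have cQ' : #|Q'| = #|Q|.+1.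
  rewrite cardsU1 cardsU1 !inE; rewrite (negbTE nl12) (negbTE l1Q) (negbTE l2Q) !andbF /=.
  by rewrite (cardsD1 v Q) vQ.
have h1 : rho_oL e <= #|Q| by apply: bigmin_le.
have h2 : #|Q'| <= rho_o e by rewrite /rho_o; apply: (@leq_bigmax_cond _ (open_packing e) (fun P => #|P|))...
move: h1 h2; rewrite /in_U in hU; rewrite hU cQ' => h1 h2.
by move: (leq_trans h2 h1); rewrite ltnn.
Qed.
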